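(* Let $G=K(n_1,\dots,n_s)$ be a complete $s$-partite graph ($s\ge 2$) with parts $V_1,\dots,V_s$, $|V_j|=n_j$. Let $j\in\{1,\dots,s\}$ with $n_j\ge 2$. Then there is an optimal $1$-relaxed coloring $f$ of $G$ (one using $\chi_1(G)$ colors) such that all vertices of $V_j$ receive the same color, i.e. $|f(V_j)|=1$.
   Context: A map $f$ from $V(G)$ to a finite set of colors is a $t$-relaxed coloring if every vertex $u$ has at most $t$ neighbors $v$ with $f(v)=f(u)$; $\chi_t(G)$ is the minimum number of colors in a $t$-relaxed coloring of $G$, and a $t$-relaxed coloring using $\chi_t(G)$ colors is called optimal. $f(S)$ denotes the set of colors used on $S$. *)

(* Defs.v *)
From mathcomp Require Import all_boot all_order.
Set Implicit Arguments. Unset Strict Implicit. Unset Printing Implicit Defensive.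

Section Relaxed.
Variable T : finType.

(* Simple graph given by an adjacency relation e; v is a neighbour of u iff
   v != u and e u v. *)
Definition relaxed_coloring (t : nat) (e : rel T) (k : nat) (f : {ffun T -> 'I_k}) : bool :=
  [forall u, #|[set v | (v != u) && e u v && (f v == f u)]| <= t].

Lemma relaxed_exists (t : nat) (e : rel T) :
  exists k, [exists f : {ffun T -> 'I_k}, relaxed_coloring t e f].
Proof.
exists #|T|; apply/existsP; exists [ffun x => enum_rank x].
apply/forallP => u.
suff -> : [set v | (v != u) && e u v && ([ffun x => enum_rank x] v == [ffun x => enum_rank x] u)] = set0
  by rewrite cards0.
apply/setP => v; rewrite !inE !ffunE.
case: (boolP (enum_rank v == enum_rank u)) => [/eqP/enum_rank_inj ->|_]; first by rewrite eqxx.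
by rewrite andbF.
Qed.

Definition chi (t : nat) (e : rel T) : nat := ex_minn (relaxed_exists t e).

End Relaxed.

(* The complete multipartite graph K(n_1,...,n_s): vertex (i, a) lies in part V_i. *)
Definition kvert (s : nat) (n : 'I_s -> nat) : finType := {i : 'I_s & 'I_(n i)}.

Definition kmulti_rel (s : nat) (n : 'I_s -> nat) : rel (kvert n) :=
  fun x y => tag x != tag y.

Definition kpart (s : nat) (n : 'I_s -> nat) (j : 'I_s) : {set kvert n} :=
  [set x | tag x == j].

(* Main.v *)
Require Import Defs.
From mathcomp Require Import all_boot.

Theorem lemma4p1 (s : nat) (n : 'I_s -> nat) (hs : 2 <= s)
  (hpos : forall i, 0 < n i) (j : 'I_s) (hj : 2 <= n j) :
  exists f : {ffun kvert n -> 'I_(chi 1 (@kmulti_rel s n))},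
    relaxed_coloring 1 (@kmulti_rel s n) f /\ #|f @: kpart n j| = 1.
Proof.
rewrite /chi; case: ex_minnP => k /existsP [f Hf] _.
set V := kpart n j.
pose x0 : kvert n := existT (fun i => 'I_(n i)) j (Ordinal (hpos j)).
have x0V : x0 \in V by rewrite inE.
case: (boolP [exists y in V, f y != f x0]) => [/existsP [y /andP [yV fy]]| Hno].
  pose c := f x0. pose d := f y.
  have cd : c != d by rewrite eq_sym.
  have key : forall z a, z \in V -> f z = a ->
      #|[set v | (tag v != j) && (f v == a)]| <= 1.
    move=> z a zV fz.
    apply: leq_trans (forallP Hf z).
    apply: subset_leq_card; apply/subsetP => v; rewrite !inE => /andP [tv fv].
    move: zV; rewrite inE => /eqP tz.
    rewrite /kmulti_rel tz fz fv !andbT.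
    apply/andP; split; last by rewrite eq_sym.
    by apply/eqP => vz; move: tv; rewrite vz tz eqxx.
  pose g := [ffun v : kvert n => if tag v == j then c else if f v == c then d else f v].
  exists g; split.
    apply/forallP => u.
    have gout : forall v, tag v != j -> g v = if f v == c then d else f v.
      by move=> v tv; rewrite ffunE (negbTE tv).
    case: (boolP (tag u == j)) => tu.
      rewrite (_ : [set _ | _] = set0) ?cards0 //.
      apply/setP => v; rewrite !inE /kmulti_rel.
      case: (boolP (tag u != tag v)) => tuv; rewrite ?andbF ?andbT //.
      have tv : tag v != j by rewrite -(eqP tu) eq_sym.
      rewrite gout // ffunE tu.
      case: ifP => [_|/negbT/negbTE ->]; last by rewrite andbF.
      have dc : d != c by rewrite eq_sym.
      by rewrite (negbTE dc) andbF.
    set A := [set v | (tag v != j) && (f v == c)] :|: [set v | (tag v != j) && (f v == d)].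
    have Acard : #|A| <= 2.
      apply: leq_trans (leq_card_setU _ _) _.
      rewrite -[2]/(1 + 1); apply: leq_add; [exact: key x0 c x0V erefl | exact: key y d yV erefl].
    case: (boolP (g u == d)) => gud.
      have uA : u \in A.
        move: gud; rewrite gout // !inE tu /=.
        by case: ifP => // _ /eqP ->; rewrite eqxx orbT.
      apply: leq_trans (_ : #|A :\ u| <= 1).
        apply: subset_leq_card; apply/subsetP => v.
        rewrite !inE /kmulti_rel (eqP gud) => /andP [/andP [vu tuv] gv].
        rewrite vu /=.
        have tv : tag v != j.
          apply: contraNneq cd => tvj.
          by move: gv; rewrite ffunE tvj eqxx.
        rewrite tv /=; move: gv; rewrite gout //.
        by case: ifP => // _ /eqP ->; rewrite eqxx orbT.
      by move: Acard; rewrite (cardsD1 u A) uA.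
    have fuc : f u != c.
      by apply: contraNneq gud => fu; rewrite gout // fu eqxx.
    have gu : g u = f u by rewrite gout // (negbTE fuc).
    apply: leq_trans (forallP Hf u).
    apply: subset_leq_card; apply/subsetP => v.
    rewrite !inE gu => /andP [/andP [vu tuv] gv].
    rewrite vu tuv /=.
    have tv : tag v != j.
      apply: contraNneq fuc => tvj.
      by move: gv; rewrite ffunE tvj eqxx eq_sym.
    move: gv; rewrite gout //.
    case: ifP => // _ /eqP du.
    by move: gud; rewrite gu du eqxx.
  rewrite (_ : g @: V = [set c]) ?cards1 //.
  apply/setP => w; rewrite inE; apply/imsetP/eqP => [[v vV ->]|->].
    by move: vV; rewrite inE ffunE => ->.
  by exists x0 => //; rewrite ffunE /= eqxx.
exists f; split => //.
rewrite (_ : f @: V = [set f x0]) ?cards1 //.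
apply/setP => w; rewrite inE; apply/imsetP/eqP => [[v vV ->]|->].
  apply/eqP; apply: contraNT Hno => H; apply/existsP; exists v; by rewrite vV.
by exists x0.
Qed.
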